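(* The intuitionistic modal logic $\mathsf{mHC}$ is canonical and has the finite model property.
   Context: $\mathsf{mHC}$ is the smallest set of formulas (built from variables, $\bot,\to,\wedge,\vee,\Box$) containing all axioms of intuitionistic propositional logic, $\Box(A\to B)\to(\Box A\to\Box B)$, $A\to\Box A$ and $\Box A\to((B\to A)\vee B)$, closed under modus ponens, necessitation and substitution. Kripke semantics: frames $(W,\unlhd,\prec)$ with $\unlhd$ a partial order, $\prec$ a relation such that $w\unlhd v\prec x$ implies $w\prec x$; valuations into $\unlhd$-upsets; $\Box A=\{w\mid\forall x(w\prec x\Rightarrow x\in A)\}$. Canonical means the logic is valid in its canonical frame (prime theories of the logic ordered by inclusion, with $\Gamma\prec\Delta$ iff $\{A\mid\Box A\in\Gamma\}\subseteq\Delta$). The finite model property means every non-theorem fails in some finite frame validating the logic. *)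

(* Defs.v *)
From Stdlib Require Import List.

Inductive form : Type :=
| Var : nat -> form
| Bot : form
| Imp : form -> form -> form
| And : form -> form -> form
| Or  : form -> form -> form
| Box : form -> form.

Fixpoint subst (s : nat -> form) (A : form) : form :=
  match A with
  | Var n => s n
  | Bot => Bot
  | Imp A B => Imp (subst s A) (subst s B)
  | And A B => And (subst s A) (subst s B)
  | Or A B => Or (subst s A) (subst s B)
  | Box A => Box (subst s A)
  end.

Inductive ipc_axiom : form -> Prop :=
| ax_K A B : ipc_axiom (Imp A (Imp B A))
| ax_S A B C : ipc_axiom (Imp (Imp A (Imp B C)) (Imp (Imp A B) (Imp A C)))
| ax_andI A B : ipc_axiom (Imp A (Imp B (And A B)))
| ax_andE1 A B : ipc_axiom (Imp (And A B) A)
| ax_andE2 A B : ipc_axiom (Imp (And A B) B)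
| ax_orI1 A B : ipc_axiom (Imp A (Or A B))
| ax_orI2 A B : ipc_axiom (Imp B (Or A B))
| ax_orE A B C : ipc_axiom (Imp (Imp A C) (Imp (Imp B C) (Imp (Or A B) C)))
| ax_efq A : ipc_axiom (Imp Bot A).

Inductive mHC : form -> Prop :=
| mHC_ipc A : ipc_axiom A -> mHC A
| mHC_boxK A B : mHC (Imp (Box (Imp A B)) (Imp (Box A) (Box B)))
| mHC_boxI A : mHC (Imp A (Box A))
| mHC_mHC A B : mHC (Imp (Box A) (Or (Imp B A) B))
| mHC_mp A B : mHC (Imp A B) -> mHC A -> mHC B
| mHC_nec A : mHC A -> mHC (Box A)
| mHC_subst s A : mHC A -> mHC (subst s A).

Definition is_frame (W : Type) (le R : W -> W -> Prop) : Prop :=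
  (forall w, le w w) /\
  (forall u v w, le u v -> le v w -> le u w) /\
  (forall u v, le u v -> le v u -> u = v) /\
  (forall w v x, le w v -> R v x -> R w x).

Definition is_valuation (W : Type) (le : W -> W -> Prop) (V : nat -> W -> Prop) : Prop :=
  forall n w v, le w v -> V n w -> V n v.

Fixpoint forces (W : Type) (le R : W -> W -> Prop) (V : nat -> W -> Prop)
  (w : W) (A : form) : Prop :=
  match A with
  | Var n => V n w
  | Bot => False
  | Imp A B => forall v, le w v -> forces W le R V v A -> forces W le R V v B
  | And A B => forces W le R V w A /\ forces W le R V w B
  | Or A B => forces W le R V w A \/ forces W le R V w B
  | Box A => forall x, R w x -> forces W le R V x A
  end.

Definition valid_in (W : Type) (le R : W -> W -> Prop) (A : form) : Prop :=
  forall V, is_valuation W le V -> forall w, forces W le R V w A.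

Definition validates_mHC (W : Type) (le R : W -> W -> Prop) : Prop :=
  forall A, mHC A -> valid_in W le R A.

Definition finite_type (W : Type) : Prop := exists l : list W, forall w, In w l.

Definition prime_theory (G : form -> Prop) : Prop :=
  (forall A, mHC A -> G A) /\
  (forall A B, G (Imp A B) -> G A -> G B) /\
  ~ G Bot /\
  (forall A B, G (Or A B) -> G A \/ G B).

Definition canW : Type := { G : form -> Prop | prime_theory G }.
Definition can_le (G D : canW) : Prop := forall A, proj1_sig G A -> proj1_sig D A.
Definition can_R (G D : canW) : Prop := forall A, proj1_sig G (Box A) -> proj1_sig D A.

Definition mHC_canonical : Prop := validates_mHC canW can_le can_R.

Definition mHC_fmp : Prop :=
  forall A, ~ mHC A ->
    exists (W : Type) (le R : W -> W -> Prop),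
      finite_type W /\ is_frame W le R /\ validates_mHC W le R /\ ~ valid_in W le R A.

(* Main.v *)
Require Import Defs.
From Stdlib Require Import List Arith Lia Classical ProofIrrelevance FunctionalExtensionality PropExtensionality Setoid.
From Stdlib Require Cantor.

Fixpoint fsize (A: form) : nat := match A with
 | Var _ | Bot => 1
 | Imp a b | And a b | Or a b => S (fsize a + fsize b)
 | Box a => S (fsize a) end.

Fixpoint enc (A : form) : nat := match A with
 | Var n => Cantor.to_nat (0, n)
 | Bot => Cantor.to_nat (1, 0)
 | Imp a b => Cantor.to_nat (2, Cantor.to_nat (enc a, enc b))
 | And a b => Cantor.to_nat (3, Cantor.to_nat (enc a, enc b))
 | Or a b => Cantor.to_nat (4, Cantor.to_nat (enc a, enc b))
 | Box a => Cantor.to_nat (5, enc a) end.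

Fixpoint dec (k n : nat) : form := match k with
 | 0 => Bot
 | S k' => match Cantor.of_nat n with
   | (0, m) => Var m
   | (1, _) => Bot
   | (2, m) => let (a, b) := Cantor.of_nat m in Imp (dec k' a) (dec k' b)
   | (3, m) => let (a, b) := Cantor.of_nat m in And (dec k' a) (dec k' b)
   | (4, m) => let (a, b) := Cantor.of_nat m in Or (dec k' a) (dec k' b)
   | (5, m) => Box (dec k' m)
   | _ => Bot end end.

Lemma dec_enc : forall A k, fsize A <= k -> dec k (enc A) = A.
Proof.
  induction A; intros k Hk; destruct k as [|k]; simpl in Hk; try lia;
  cbn [dec enc]; rewrite ?Cantor.cancel_of_to; try reflexivity;
  rewrite ?Cantor.cancel_of_to; f_equal; try (apply IHA1; lia); try (apply IHA2; lia);
  try (apply IHA; lia).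
Qed.

Definition enum (n : nat) : form := let (k, m) := Cantor.of_nat n in dec k m.


Lemma enum_surj : forall A, exists n, enum n = A.
Proof.
  intro A. exists (Cantor.to_nat (fsize A, enc A)). unfold enum.
  rewrite Cantor.cancel_of_to. apply dec_enc. lia.
Qed.

Inductive Der (G : form -> Prop) : form -> Prop :=
| D_hyp A : G A -> Der G A
| D_thm A : mHC A -> Der G A
| D_mp A B : Der G (Imp A B) -> Der G A -> Der G B.

Lemma tK A B : mHC (Imp A (Imp B A)). Proof. apply mHC_ipc; constructor. Qed.
Lemma tS A B C : mHC (Imp (Imp A (Imp B C)) (Imp (Imp A B) (Imp A C))).
Proof. apply mHC_ipc; constructor. Qed.
Lemma tI A : mHC (Imp A A).
Proof.
  eapply mHC_mp. eapply mHC_mp. apply (tS A (Imp A A) A). apply tK. apply tK.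
Qed.

Lemma Der_ax G A : (exists X, ipc_axiom X /\ X = A) -> Der G A.
Proof. intros [X [H <-]]. apply D_thm. now apply mHC_ipc. Qed.

Lemma Der_mono (G G' : form -> Prop) A : (forall X, G X -> G' X) -> Der G A -> Der G' A.
Proof. intros H D; induction D. apply D_hyp; auto. now apply D_thm. eapply D_mp; eauto. Qed.

Lemma deduction G B C : Der (fun X => G X \/ X = B) C -> Der G (Imp B C).
Proof.
  intro D; induction D as [A [HA| ->]|A HA|A C' D1 IH1 D2 IH2].
  - eapply D_mp. apply D_thm, tK. now apply D_hyp.
  - apply D_thm, tI.
  - eapply D_mp. apply D_thm, tK. now apply D_thm.
  - eapply D_mp. eapply D_mp. apply D_thm, (tS B A C'). exact IH1. exact IH2.
Qed.

Lemma compact (ch : nat -> form -> Prop) :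
  (forall n m X, n <= m -> ch n X -> ch m X) ->
  forall A, Der (fun X => exists n, ch n X) A -> exists n, Der (ch n) A.
Proof.
  intros Hm A D; induction D as [A [n HA]|A HA|A B D1 [n1 IH1] D2 [n2 IH2]].
  - exists n; now apply D_hyp.
  - exists 0; now apply D_thm.
  - exists (max n1 n2). eapply D_mp.
    + eapply Der_mono; [|exact IH1]. intros; eapply Hm; [|eauto]; lia.
    + eapply Der_mono; [|exact IH2]. intros; eapply Hm; [|eauto]; lia.
Qed.

Lemma th_der G A : prime_theory G -> Der G A -> G A.
Proof.
  intros [H1 [H2 _]] D; induction D; eauto.
Qed.

Fixpoint chain (G : form -> Prop) (C : form) (n : nat) : form -> Prop :=
  match n with
  | 0 => G
  | S k => fun X => chain G C k X \/
          (X = enum k /\ ~ Der (fun Y => chain G C k Y \/ Y = enum k) C)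
  end.

Lemma chain_mono G C : forall n m X, n <= m -> chain G C n X -> chain G C m X.
Proof.
  intros n m X Hle; induction Hle; auto. intros H; simpl; left; auto.
Qed.

Lemma chain_ok G C : ~ Der G C -> forall n, ~ Der (chain G C n) C.
Proof.
  intros H0 n; induction n; simpl; auto.
  destruct (classic (Der (fun Y => chain G C n Y \/ Y = enum n) C)) as [D|D].
  - intro D'. apply IHn. eapply Der_mono; [|exact D'].
    intros X [HX|[_ HX]]; tauto.
  - intro D'. apply D. eapply Der_mono; [|exact D'].
    intros X [HX|[HX _]]; auto.
Qed.

Lemma lindenbaum G C : ~ Der G C ->
  exists H, prime_theory H /\ (forall X, G X -> H X) /\ ~ H C.
Proof.
  intro H0. set (H := fun X => exists n, chain G C n X).
  assert (HnD : ~ Der H C).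
  { intro D. destruct (compact _ (chain_mono G C) C D) as [n Dn].
    exact (chain_ok G C H0 n Dn). }
  assert (Hcl : forall X, Der H X -> H X).
  { intros X D. destruct (enum_surj X) as [k Hk].
    exists (S k). simpl. right. split; [auto|].
    intro D'. apply deduction in D'. rewrite Hk in D'.
    apply HnD. eapply D_mp; [|exact D].
    eapply Der_mono; [|exact D']. intros Y HY; exists k; auto. }
  exists H. split; [|split].
  - split; [|split; [|split]].
    + intros A HA; apply Hcl, D_thm, HA.
    + intros A B H1 H2; apply Hcl; eapply D_mp; apply D_hyp; eauto.
    + intro HB. apply HnD. eapply D_mp; [|apply D_hyp; exact HB].
      apply Der_ax; eexists; split; [constructor|reflexivity].
    + intros A B HAB. apply NNPP; intro Hn.
      assert (Hdn : forall X, ~ H X -> Der H (Imp X C)).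
      { intros X HX. destruct (enum_surj X) as [k Hk].
        assert (Hc : ~ chain G C (S k) X) by (intro; apply HX; exists (S k); auto).
        simpl in Hc. assert (D: Der (fun Y => chain G C k Y \/ Y = enum k) C)
          by (apply NNPP; intro; apply Hc; right; auto).
        rewrite Hk in D. apply deduction in D.
        eapply Der_mono; [|exact D]. intros Y HY; exists k; auto. }
      apply HnD. eapply D_mp; [|apply D_hyp; exact HAB].
      eapply D_mp; [eapply D_mp|].
      * apply Der_ax; eexists; split; [apply (ax_orE A B C)|reflexivity].
      * apply Hdn; tauto.
      * apply Hdn; tauto.
  - intros X HX; exists 0; auto.
  - intro HC; apply HnD, D_hyp, HC.
Qed.

Section Sound.
Variables (W : Type) (le R : W -> W -> Prop).
Hypothesis Hrefl : forall w, le w w.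
Hypothesis Htrans : forall u v w, le u v -> le v w -> le u w.
Hypothesis Hcomp : forall w v x, le w v -> R v x -> R w x.
Hypothesis HRle : forall w v, R w v -> le w v.
Hypothesis Hstr : forall w v, le w v -> ~ le v w -> R w v.

Lemma persist V : is_valuation W le V -> forall A w v, le w v ->
  forces W le R V w A -> forces W le R V v A.
Proof.
  intros HV A; unfold is_valuation in HV; induction A; simpl; intros w v Hwv H; eauto; try contradiction.
  all: try (destruct H; [left|right]; eauto; fail).
  all: try (destruct H; split; eauto; fail).
Qed.

Lemma subst_forces V s : forall A w,
  forces W le R V w (subst s A) <-> forces W le R (fun n u => forces W le R V u (s n)) w A.
Proof.
  induction A; simpl; intros w; try tauto.
  - split; intros H v Hv HA; apply IHA2, H, IHA1; auto.
  - rewrite IHA1, IHA2; tauto.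
  - rewrite IHA1, IHA2; tauto.
  - split; intros H x Hx; apply IHA, H; auto.
Qed.

Lemma soundness : forall A, mHC A -> valid_in W le R A.
Proof.
  intros A HA; induction HA; intros V HV w; simpl.
  - destruct H; simpl; intros.
    + exact (persist V HV _ _ _ H1 H0).
    + exact (H0 v1 (Htrans _ _ _ H1 H3) H4 v1 (Hrefl _) (H2 v1 H3 H4)).
    + split; [exact (persist V HV _ _ _ H1 H0)| exact H2].
    + tauto.
    + tauto.
    + left; auto.
    + right; auto.
    + destruct H4; [apply (H0 v1 (Htrans _ _ _ H1 H3))| apply (H2 v1 H3)]; auto.
    + contradiction.
  - intros v1 H1 HB v2 H2 HA x Hx. apply (HB x (Hcomp _ _ _ H2 Hx)); auto.
  - intros v H HA x Hx. exact (persist V HV _ _ _ (HRle _ _ Hx) HA).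
  - intros v Hv HB. destruct (classic (forces W le R V v B)) as [Hb|Hb]; [right; auto|left].
    intros u Hu HBu. apply HB. apply Hstr; auto. intro Huv. apply Hb. eapply persist; eauto.
  - exact (IHHA1 V HV w w (Hrefl w) (IHHA2 V HV w)).
  - intros; apply IHHA; auto.
  - apply subst_forces. apply IHHA.
    intros n u v Huv H; eapply persist; eauto.
Qed.
End Sound.

Section Th.
Variable G : form -> Prop.
Hypothesis HG : prime_theory G.
Lemma th_thm A : mHC A -> G A. Proof. apply HG. Qed.
Lemma th_mp A B : G (Imp A B) -> G A -> G B. Proof. apply HG. Qed.
Lemma th_ax A : ipc_axiom A -> G A. Proof. intro; apply th_thm, mHC_ipc; auto. Qed.
Lemma th_bot : ~ G Bot. Proof. apply HG. Qed.
Lemma th_prime A B : G (Or A B) -> G A \/ G B. Proof. apply HG. Qed.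
Lemma th_and A B : G (And A B) <-> G A /\ G B.
Proof.
  split.
  - intro H; split; [exact (th_mp _ _ (th_ax _ (ax_andE1 A B)) H)|exact (th_mp _ _ (th_ax _ (ax_andE2 A B)) H)].
  - intros [H1 H2]. exact (th_mp _ _ (th_mp _ _ (th_ax _ (ax_andI A B)) H1) H2).
Qed.
Lemma th_or A B : G (Or A B) <-> G A \/ G B.
Proof.
  split; [apply th_prime|]. intros [H|H]; [exact (th_mp _ _ (th_ax _ (ax_orI1 A B)) H)|exact (th_mp _ _ (th_ax _ (ax_orI2 A B)) H)].
Qed.
Lemma th_K A B : G A -> G (Imp B A).
Proof. intro H; exact (th_mp _ _ (th_ax _ (ax_K A B)) H). Qed.
Lemma th_boxI A : G A -> G (Box A).
Proof. intro H; exact (th_mp _ _ (th_thm _ (mHC_boxI A)) H). Qed.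
Lemma th_mhc A B : G (Box A) -> G (Or (Imp B A) B).
Proof. intro H; exact (th_mp _ _ (th_thm _ (mHC_mHC A B)) H). Qed.
Lemma th_box_der B : Der (fun D => G (Box D)) B -> G (Box B).
Proof.
  intro D; induction D; auto.
  - apply th_thm, mHC_nec; auto.
  - exact (th_mp _ _ (th_mp _ _ (th_thm _ (mHC_boxK A B)) IHD1) IHD2).
Qed.
End Th.

Lemma canonical_ok : mHC_canonical.
Proof.
  unfold mHC_canonical, validates_mHC. intros A HA.
  apply soundness; unfold can_le, can_R.
  - intros; auto.
  - intros; eauto.
  - intros [G HG] [D HD] [X HX]; simpl; auto.
  - intros [G HG] [D HD] H B HB; simpl in *. apply H, th_boxI; auto.
  - intros [G HG] [D HD] H1 H2 B HB; simpl in *.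
    apply NNPP; intro Hn. apply H2. intros C HC. apply NNPP; intro HnC.
    destruct (th_prime _ HG _ _ (th_mhc _ HG _ C HB)) as [H3|H3]; [|tauto].
    apply Hn. exact (th_mp _ HD _ _ (H1 _ H3) HC).
  - exact HA.
Qed.

Fixpoint sub (A : form) : list form := A :: match A with
  | Imp B C | And B C | Or B C => sub B ++ sub C
  | Box B => sub B
  | _ => nil end.

Lemma in_sub_self A : In A (sub A). Proof. destruct A; left; auto. Qed.

Lemma sub_trans : forall Y X, In X (sub Y) -> forall Z, In Z (sub X) -> In Z (sub Y).
Proof.
  induction Y; simpl; intros X HX Z HZ; destruct HX as [<-|HX]; simpl in HZ; auto;
  try contradiction;
  try (apply in_app_or in HX; destruct HX as [HX|HX]; right; apply in_or_app;
       [left; eapply IHY1|right; eapply IHY2]; eauto);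
  try (right; eapply IHY; eauto).
Qed.

Definition closedL (L : list form) := forall B, In B L -> forall C, In C (sub B) -> In C L.

Lemma closed_sub A : closedL (sub A).
Proof. intros B HB C HC; eapply sub_trans; eauto. Qed.

Section Fin.
Variable L : list form.
Hypothesis HL : closedL L.

Definition FW := {S : form -> Prop | exists G, prime_theory G /\ forall B, S B <-> (G B /\ In B L)}.
Definition fle (S T : FW) : Prop := (forall B, proj1_sig S B -> proj1_sig T B) /\
  ((forall B, proj1_sig T B -> proj1_sig S B) \/ (forall B, proj1_sig S (Box B) -> proj1_sig T B)).
Definition fR (S T : FW) : Prop := (forall B, proj1_sig S B -> proj1_sig T B) /\
  (forall B, proj1_sig S (Box B) -> proj1_sig T B).
Definition fV (n : nat) (S : FW) : Prop := proj1_sig S (Var n).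

Definition mkW (H : form -> Prop) (pH : prime_theory H) : FW :=
  exist _ (fun X => H X /\ In X L) (ex_intro _ H (conj pH (fun B => iff_refl _))).

Lemma cl2 B C X : In X L -> In B (sub X) -> In C (sub X) -> In B L /\ In C L.
Proof. intros; split; eapply HL; eauto. Qed.

Lemma FW_ext (w1 w2 : FW) : (forall B, proj1_sig w1 B <-> proj1_sig w2 B) -> w1 = w2.
Proof.
  destruct w1 as [x px], w2 as [y py]; simpl; intro H.
  assert (x = y) by (extensionality B; apply propositional_extensionality; auto).
  subst. f_equal. apply proof_irrelevance.
Qed.

Lemma fle_refl w : fle w w. Proof. split; auto. Qed.
Lemma fle_trans u v w : fle u v -> fle v w -> fle u w.
Proof.
  intros [i1 [b1|c1]] [i2 [b2|c2]]; split; auto.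
  all: right; intros B HB.
  all: first [apply i2, c1, HB | apply c2, i1, HB].
Qed.
Lemma fle_antisym u v : fle u v -> fle v u -> u = v.
Proof. intros [i1 _] [i2 _]; apply FW_ext; split; auto. Qed.
Lemma f_comp w v x : fle w v -> fR v x -> fR w x.
Proof. intros [i1 _] [i2 c2]; split; auto. Qed.
Lemma f_Rle w v : fR w v -> fle w v.
Proof. intros [i c]; split; auto. Qed.
Lemma f_str w v : fle w v -> ~ fle v w -> fR w v.
Proof.
  intros [i [b|c]] Hn. exfalso; apply Hn; split; auto. split; auto.
Qed.

Lemma truth : forall B, In B L -> forall w : FW,
  forces FW fle fR fV w B <-> proj1_sig w B.
Proof.
  induction B; intros HB w; destruct (proj2_sig w) as [G [pG HS]]; simpl.
  - unfold fV; tauto.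
  - split; [contradiction|]. intro H; apply HS in H; destruct H as [H _].
    exfalso; exact (th_bot G pG H).
  - destruct (cl2 B1 B2 _ HB) as [HB1 HB2]; simpl; auto using in_sub_self, in_or_app.
    split.
    + intro Hf. apply HS. split; [|auto]. apply NNPP; intro Hn.
      destruct (classic (G B1)) as [GB|GB].
      * assert (Hc : forces FW fle fR fV w B2).
        { apply Hf; [apply fle_refl|]. apply IHB1; auto. apply HS; auto. }
        apply IHB2 in Hc; auto. apply HS in Hc. apply Hn, th_K; tauto.
      * assert (ND : ~ Der (fun X => G X \/ X = B1) B2).
        { intro D. apply deduction in D. apply Hn. apply th_der; auto. }
        destruct (lindenbaum _ _ ND) as [H [pH [Hinc HnC]]].
        set (T := mkW H pH).
        assert (Hle : fle w T).
        { split.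
          - intros X HX. apply HS in HX. simpl. split; [apply Hinc|]; tauto.
          - right. intros D HD. apply HS in HD. destruct HD as [GD ID].
            destruct (th_prime _ pG _ _ (th_mhc _ pG _ B1 GD)) as [H3|H3]; [|tauto].
            simpl. split.
            + apply (th_mp _ pH B1); auto.
            + eapply HL; [exact ID|]. simpl. right. apply in_sub_self. }
        assert (Hc : forces FW fle fR fV T B2).
        { apply Hf; auto. apply IHB1; auto. simpl. split; auto. }
        apply IHB2 in Hc; auto. simpl in Hc. tauto.
    + intros Himp v Hwv HvB. apply IHB1 in HvB; auto. apply IHB2; auto.
      destruct (proj2_sig v) as [H [pH HvS]].
      apply HvS. apply HvS in HvB. destruct Hwv as [inc _].
      apply inc, HvS in Himp. split; [|auto].
      apply (th_mp _ pH B1); tauto.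
  - destruct (cl2 B1 B2 _ HB) as [HB1 HB2]; simpl; auto using in_sub_self, in_or_app.
    rewrite IHB1, IHB2, !HS, (th_and _ pG); auto. tauto.
  - destruct (cl2 B1 B2 _ HB) as [HB1 HB2]; simpl; auto using in_sub_self, in_or_app.
    rewrite IHB1, IHB2, !HS, (th_or _ pG); auto. tauto.
  - assert (HB1 : In B L) by (eapply HL; [exact HB|]; simpl; right; apply in_sub_self).
    split.
    + intro Hf. apply HS. split; [|auto]. apply NNPP; intro Hn.
      assert (ND : ~ Der (fun D => G (Box D)) B).
      { intro D. apply Hn. apply th_box_der; auto. }
      destruct (lindenbaum _ _ ND) as [H [pH [Hinc HnC]]].
      set (T := mkW H pH).
      assert (HR : fR w T).
      { split.
        - intros X HX. apply HS in HX. simpl. split; [apply Hinc, th_boxI|]; tauto.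
        - intros D HD. apply HS in HD. destruct HD as [GD ID]. simpl. split; auto.
          eapply HL; [exact ID|]. simpl. right. apply in_sub_self. }
      assert (Hc := Hf T HR). apply IHB in Hc; auto. simpl in Hc. tauto.
    + intros Hb x [_ Hx]. apply IHB; auto.
Qed.

Lemma subsets_list : forall L' : list form, exists ls : list (form -> Prop),
  forall S : form -> Prop, (forall B, S B -> In B L') ->
  exists S', In S' ls /\ forall B, S B <-> S' B.
Proof.
  induction L' as [|a L' IH].
  - exists ((fun _ => False) :: nil). intros S HS. exists (fun _ => False).
    split; [left; auto|]. intro B; split; [intro H; apply (HS B H)|contradiction].
  - destruct IH as [ls Hls].
    exists (ls ++ map (fun S' B => B = a \/ S' B) ls). intros S HS.
    destruct (Hls (fun B => S B /\ B <> a)) as [S' [HinS' Heq]].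
    { intros B [HB Hne]. destruct (HS B HB); [congruence|auto]. }
    destruct (classic (S a)) as [Ha|Ha].
    + exists (fun B => B = a \/ S' B). split.
      * apply in_or_app; right. apply (in_map (fun S' B => B = a \/ S' B)); auto.
      * intro B; split.
        -- intro HB. destruct (classic (B = a)); [left; auto|right; apply Heq; auto].
        -- intros [->|HB]; auto. apply Heq in HB; tauto.
    + exists S'. split; [apply in_or_app; left; auto|].
      intro B; rewrite <- Heq; split; [intro HB; split; [auto|intro; subst; contradiction]|tauto].
Qed.

Lemma list_W : forall ls : list (form -> Prop), exists l : list FW,
  forall S', In S' ls -> forall w : FW, (forall B, proj1_sig w B <-> S' B) -> In w l.
Proof.
  induction ls as [|S' ls [l Hl]].
  - exists nil; intros _ [].
  - destruct (classic (exists w0 : FW, forall B, proj1_sig w0 B <-> S' B)) as [[w0 Hw0]|Hn].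
    + exists (w0 :: l). intros S'' [<-|Hin] w Hw.
      * left. apply FW_ext. intro B. rewrite Hw0, Hw. tauto.
      * right; eauto.
    + exists l. intros S'' [<-|Hin] w Hw; [exfalso; apply Hn; eauto|eauto].
Qed.

Lemma FW_finite : finite_type FW.
Proof.
  destruct (subsets_list L) as [ls Hls]. destruct (list_W ls) as [l Hl].
  exists l. intro w. destruct (proj2_sig w) as [G [pG HS]].
  destruct (Hls (proj1_sig w)) as [S' [HS' Heq]].
  { intros B HB; apply HS in HB; tauto. }
  eapply Hl; eauto.
Qed.

Lemma FW_frame : is_frame FW fle fR.
Proof.
  split; [exact fle_refl|split; [exact fle_trans|split; [exact fle_antisym|exact f_comp]]].
Qed.

Lemma FW_valid : validates_mHC FW fle fR.
Proof.
  intros A HA. apply soundness; auto.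
  exact fle_refl. exact fle_trans. exact f_comp. exact f_Rle. exact f_str.
Qed.
End Fin.

Lemma der_empty A : Der (fun _ => False) A -> mHC A.
Proof. intro D; induction D; [contradiction|auto|eapply mHC_mp; eauto]. Qed.

Lemma fmp_ok : mHC_fmp.
Proof.
  intros A HnA.
  assert (ND : ~ Der (fun _ => False) A) by (intro D; apply HnA, der_empty, D).
  destruct (lindenbaum _ _ ND) as [G [pG [_ HnG]]].
  exists (FW (sub A)), (fle (sub A)), (fR (sub A)).
  split; [apply FW_finite|split; [apply FW_frame|split; [apply FW_valid|]]].
  intro Hv. specialize (Hv (fV (sub A))).
  assert (HV : is_valuation _ (fle (sub A)) (fV (sub A))).
  { intros n w v [i _] H; apply i, H. }
  specialize (Hv HV (mkW (sub A) G pG)).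
  apply (truth (sub A) (closed_sub A) A (in_sub_self A)) in Hv.
  simpl in Hv. tauto.
Qed.

Theorem corollary4p13 : mHC_canonical /\ mHC_fmp.
Proof.
  split; [exact canonical_ok | exact fmp_ok].
Qed.
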